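(* Let $x,y$ be non-commuting indeterminates and $C=xyx^{-1}y^{-1}$. Let $(R_n)_{n\in\mathbb Z}$ satisfy $$R_{2n}CR_{2n-2}=1+R_{2n-1},\qquad R_{2n+1}CR_{2n-1}=1+R_{2n}^4\qquad(n\in\mathbb Z),$$ with $R_0=yxy^{-1}$ and $R_1=y$. Then for all $n\ge0$, $u_n=R_{2n}$ is a Laurent polynomial in $x,y$ with only non-negative integer coefficients.
   Context: Work in the free skew field (non-commutative rational functions) over $\mathbb C$ generated by $x,y$. A Laurent polynomial in $x,y$ is a $\mathbb Z$-linear combination of words in $x^{\pm1},y^{\pm1}$. *)

(* Defs.v *)
From HB Require Import structures.
From mathcomp Require Import all_boot all_order all_algebra.
From mathcomp Require Import reals.
From mathcomp.real_closed Require Import complex.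
Set Implicit Arguments. Unset Strict Implicit. Unset Printing Implicit Defensive.
Import Order.TTheory GRing.Theory Num.Theory.
Local Open Scope ring_scope.

(* A word in the letters x,y: false = x, true = y. *)
Definition word := seq bool.
(* A noncommutative polynomial in K<x,y>, presented as a formal finite sum
   of (coefficient, monomial); two presentations denote the same element of
   K<x,y> iff they have the same coefficient at every word. *)
Definition ncp (K : Type) := seq (K * word).

Definition ncp_coef (K : nmodType) (p : ncp K) (w : word) : K :=
  \sum_(t <- p | t.2 == w) t.1.

Definition ncp_mul (K : pzSemiRingType) (p q : ncp K) : ncp K :=
  [seq (a.1 * b.1, a.2 ++ b.2) | a <- p, b <- q].

Definition ncmx_factors (K : pzSemiRingType) (n r : nat)
  (A : 'I_n -> 'I_n -> ncp K) (P : 'I_n -> 'I_r -> ncp K)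
  (Q : 'I_r -> 'I_n -> ncp K) : Prop :=
  forall i j w, ncp_coef (A i j) w =
    ncp_coef (flatten [seq ncp_mul (P i k) (Q k j) | k <- enum 'I_r]) w.

Definition ncmx_full (K : pzSemiRingType) (n : nat) (A : 'I_n -> 'I_n -> ncp K) : Prop :=
  forall r, (r < n)%N -> ~ exists P Q, @ncmx_factors K n r A P Q.

Definition word_eval (K : pzRingType) (D : lalgType K) (x y : D) (w : word) : D :=
  \prod_(b <- w) (if b then y else x).

Definition ncp_eval (K : pzRingType) (D : lalgType K) (x y : D) (p : ncp K) : D :=
  \sum_(t <- p) t.1 *: word_eval x y t.2.

(* (D, x, y) is the free skew field (= universal field of fractions of the
   free algebra K<x,y>, Cohn): D is a division K-algebra (K central), D is
   generated as a skew field by K, x, y, and every full matrix over K<x,y>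
   becomes invertible over D. *)
Definition is_free_skew_field (K : fieldType) (D : unitAlgType K) (x y : D) : Prop :=
  [/\ (forall a : D, a != 0 -> a \is a GRing.unit),
      (forall S : D -> Prop, S x -> S y -> (forall c : K, S (c%:A)) ->
         (forall a b, S a -> S b -> S (a + b)) ->
         (forall a b, S a -> S b -> S (a * b)) ->
         (forall a, S a -> S (a^-1)) -> forall d, S d) &
      (forall n (A : 'I_n -> 'I_n -> ncp K), ncmx_full A ->
         exists B : 'M[D]_n,
           (\matrix_(i, j) ncp_eval x y (A i j)) *m B = 1%:M /\
           B *m (\matrix_(i, j) ncp_eval x y (A i j)) = 1%:M)].

(* A letter of a Laurent word: (false,_) = x, (true,_) = y; second
   component true means the inverse letter. *)
Definition lword_eval (D : unitRingType) (x y : D) (w : seq (bool * bool)) : D :=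
  \prod_(l <- w) (let v := if l.1 then y else x in if l.2 then v^-1 else v).

Definition nonneg_laurent (D : unitRingType) (x y : D) (d : D) : Prop :=
  exists s : seq (nat * seq (bool * bool)),
    d = \sum_(t <- s) t.1%:R * lword_eval x y t.2.

(* Main.v *)
Require Import Defs.
From HB Require Import structures.
From mathcomp Require Import all_boot all_order all_algebra.
From mathcomp Require Import reals.
From mathcomp.real_closed Require Import complex.
From mathcomp Require Import zify.
Import GRing.Theory Num.Theory.
Local Open Scope ring_scope.


Section Alg.
Variable D : unitRingType.
Implicit Types a s t v w C : D.

Lemma comm1V v : v \is a GRing.unit -> v^-1 * (1 + v) = (1 + v) * v^-1.
Proof. by move=> uv; rewrite mulrDr mulrDl mulr1 mul1r mulVr // divrr // addrC. Qed.

Lemma qF2 s v C : s \is a GRing.unit -> s * v = v * C * s -> v * s^-1 = s^-1 * v * C.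
Proof.
move=> us h; apply: (mulrI us); apply: (mulIr us).
by rewrite !mulrA divrr // mul1r mulrVK // h.
Qed.

Lemma qF3 s v C : v \is a GRing.unit -> s * v = v * C * s -> v^-1 * s = C * s * v^-1.
Proof.
move=> uv h; apply: (mulrI uv); apply: (mulIr uv).
by rewrite !mulrA divrr // mul1r mulrVK // -mulrA -h.
Qed.
End Alg.
Arguments qF2 {D s v C}.
Arguments qF3 {D s v C}.
Arguments comm1V {D v}.


Section Alg.
Variable D : unitRingType.
Implicit Types a s t v w C : D.

Lemma i_eq a s t v w C : C \is a GRing.unit -> s \is a GRing.unit -> v \is a GRing.unit ->
  s * v = v * C * s -> w * C * s = 1 + v -> v * C * t = 1 + s ^+ 4 -> s * C * a = 1 + t ->
  v * (w + C * a) = (1 + v) * s^-1 * (1 + v) + s ^+ 3.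
Proof.
move=> uC us uv Q E2 O E1.
have uCs : C * s \is a GRing.unit by rewrite unitrMl.
have vw : v * w = (1 + v) * s^-1 * v.
  apply: (mulIr uCs).
  by rewrite -mulrA (mulrA w) E2 -!mulrA (mulrA v) -Q mulKr // mulrDl mulrDr mul1r mulr1.
have Ca : C * a = s^-1 * (1 + t) by rewrite -E1 -!mulrA mulKr.
have vCa : v * (C * a) = s^-1 * (v * C) + s^-1 + s ^+ 3.
  rewrite Ca mulrA (qF2 us Q) -!mulrA mulrDr mulr1 mulrDr [v * (C * t)]mulrA O.
  by rewrite !mulrDr mulr1 exprS mulKr // addrA.

rewrite mulrDr vw vCa.
rewrite [in RHS]mulrDr mulr1 [(1 + v) * s^-1]mulrDl mul1r (qF2 us Q).
rewrite -!mulrA.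
by rewrite [s^-1 * (v*C) + s^-1]addrC addrA [_ * v + _]addrC.
Qed.
End Alg.


Section Alg.
Variable D : unitRingType.
Implicit Types a s t v w C : D.

Lemma iphi_eq a s t v w C : C \is a GRing.unit -> s \is a GRing.unit -> t \is a GRing.unit ->
  t * s = s * C * t -> s * C * a = 1 + t -> v * C * t = 1 + s ^+ 4 -> w * C * s = 1 + v ->
  s * (w + C * a) = ((1 + t) * s^-1 * (1 + t) + s ^+ 3) * t^-1 * s.
Proof.
move=> uC us ut Q E1 O E2.
have uCs : C * s \is a GRing.unit by rewrite unitrMl.
have uCt : C * t \is a GRing.unit by rewrite unitrMl.
have sv : s * v = (1 + s ^+ 4) * t^-1 * s.
  apply: (mulIr uCt).
  rewrite -mulrA (mulrA v) O -!mulrA (mulrA s C t) -Q mulKr //.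
  by rewrite mulrDr mulrDl mulr1 mul1r -exprS exprSr.
have sw : s * w = C^-1 + (1 + s ^+ 4) * t^-1 * C^-1.
  apply: (mulIr uCs).
  rewrite -mulrA (mulrA w) E2 mulrDr mulr1 sv [in RHS]mulrDl mulKr //.
  by rewrite -!mulrA mulKr.
have F5 : t^-1 * s = s * t^-1 * C^-1.
  apply: (mulIr uCt).
  by rewrite -mulrA (mulrA s C t) -Q mulKr // -!mulrA mulKr // mulVr // mulr1.
have key : (1 + t) * (s * t^-1 * C^-1) = s * t^-1 * C^-1 + s.
  by rewrite mulrDl mul1r !mulrA Q mulrK // mulrK.
rewrite mulrDr sw mulrA E1.
rewrite -[_ / t * s]mulrA F5 [in RHS]mulrDl -[(1 + t) / s * (1 + t) * _]mulrA key mulrDr mulrVK //.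
have e1 : (1 + t) / s * (s / t / C) = t^-1 / C + C^-1.
  by rewrite -mulrA -!mulrA mulKr // mulrDl mul1r mulVKr.
have e2 : s ^+ 3 * (s / t / C) = s ^+ 4 / t / C by rewrite !mulrA -exprSr.
rewrite e1 e2 !mulrDl !mul1r.
rewrite addrA [C^-1 + _]addrC -!addrA; congr (_ + _); rewrite addrCA; congr (_ + _).
by rewrite addrCA (addrC (s ^+ 4 / t / C)).
Qed.
End Alg.


Section Alg.
Variable D : unitRingType.
Implicit Types a s t v w C : D.

Lemma ii_eq s v w C : C \is a GRing.unit -> s \is a GRing.unit -> v \is a GRing.unit ->
  w \is a GRing.unit ->
  s * v = v * C * s -> w * C * s = 1 + v ->
  v^-1 * ((1 + v) * s^-1 * (1 + v) + s ^+ 3) * s^-1 =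
  w^-1 * ((1 + v) * w^-1 * (1 + v) + w ^+ 3) * v^-1.
Proof.
move=> uC us uv uw Q E2.
have F3 := qF3 uv Q.
have F4 : w^-1 * (1 + v) = C * s by rewrite -E2 -!mulrA mulKr.
have F6 : w * v^-1 * s = (1 + v) * v^-1 by rewrite -mulrA F3 !mulrA E2.
suff H : w * v^-1 * ((1 + v) * s^-1 * (1 + v) + s ^+ 3) =
         ((1 + v) * w^-1 * (1 + v) + w ^+ 3) * v^-1 * s.
  apply: (mulrI uw); apply: (mulIr us).
  by rewrite !mulrA mulrVK // H divrr // mul1r.
have L : w * v^-1 * ((1 + v) * s^-1 * (1 + v) + s ^+ 3) =
         (1 + v) * v^-1 * s ^+ 2 + w ^+ 2 * (1 + v) * v^-1.
  rewrite mulrDr addrC; congr (_ + _).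
    by rewrite (exprS s 2) mulrA F6.
  have st1 : w * v^-1 * ((1 + v) * s^-1 * (1 + v)) = w * (1 + v) * v^-1 * s^-1 * (1 + v).
    by rewrite !mulrA -(mulrA w) comm1V // mulrA.
  have st2 : w * (1 + v) = w * w * C * s by rewrite -E2 !mulrA.
  rewrite st1 st2 -!mulrA (mulrA C s) (mulrA (C * s)) -F3 -mulrA mulVKr // comm1V //.

have R : ((1 + v) * w^-1 * (1 + v) + w ^+ 3) * v^-1 * s =
         (1 + v) * v^-1 * s ^+ 2 + w ^+ 2 * (1 + v) * v^-1.
  rewrite -mulrA mulrDl; congr (_ + _).
    by rewrite -!mulrA (mulrA w^-1) F4 (mulrA (C * s) v^-1 s) -F3 -(mulrA v^-1 s s) -expr2.
  by rewrite exprSr -mulrA (mulrA w) F6 mulrA.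
by rewrite L R.
Qed.
End Alg.


Section Sc.
Variable K : numClosedFieldType.
Variable D : unitAlgType K.
Hypothesis Hdiv : forall a : D, a != 0 -> a \is a GRing.unit.

Lemma sc_comm (k : K) (b : D) : b * k%:A = k%:A * b.
Proof. by rewrite -scalerAr -scalerAl mulr1 mul1r. Qed.

Lemma sc_mul (k l : K) : k%:A * l%:A = (k * l)%:A :> D.
Proof. by rewrite -scalerAl mul1r scalerA. Qed.

Lemma dom0 {p q : D} : p * q = 0 -> p = 0 \/ q = 0.
Proof.
move=> h; have [->|nz] := eqVneq p 0; first by left.
by right; rewrite -(mulKr (Hdiv _ nz) q) h mulr0.
Qed.

Lemma sq_sc (b : D) (c : K) : b ^+ 2 = c%:A -> exists k : K, b = k%:A.
Proof.
move=> h; set k0 := sqrtC c.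
have e : (b - k0%:A) * (b + k0%:A) = 0.
  rewrite mulrDr !mulrBl -sc_comm sc_mul -expr2 h -expr2 /k0 sqrtCK.
  by rewrite addrA subrK subrr.
case: (dom0 e) => /eqP.
  by rewrite subr_eq0 => /eqP ->; exists k0.
rewrite addr_eq0 => /eqP ->; exists (- k0); by rewrite scaleNr.
Qed.

Lemma q4_sc (b : D) : 1 + b ^+ 4 = 0 -> exists k : K, b = k%:A.
Proof.
move=> h.
have e : (b ^+ 2 - 'i%:A) * (b ^+ 2 + 'i%:A) = 0.
  rewrite mulrDr !mulrBl -sc_comm sc_mul -!expr2 sqrCi -exprM /=.
  rewrite addrA subrK scaleN1r opprK addrC; exact: h.
case: (dom0 e) => /eqP.
  by rewrite subr_eq0 => /eqP; apply: sq_sc.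
by rewrite addr_eq0 -scaleNr => /eqP; apply: sq_sc.
Qed.

Lemma sc_noncomm (a b C : D) (k : K) : a \is a GRing.unit -> k != 0 ->
  b = k%:A -> a * b = b * C * a -> C = 1.
Proof.
move=> ua nk -> h.
have : k *: a = k *: (C * a) by rewrite -{1}[a]mulr1 scalerAr h -mulrA -scalerAl mul1r.
move=> /(congr1 (fun z => k^-1 *: z)); rewrite !scalerA mulVf // !scale1r => e.
by apply: (mulIr ua); rewrite mul1r.
Qed.
End Sc.


Section NL.
Variable D : unitRingType.
Variables x y : D.

Lemma lword_cat (w1 w2 : seq (bool * bool)) :
  lword_eval x y (w1 ++ w2) = lword_eval x y w1 * lword_eval x y w2.
Proof. by rewrite /lword_eval big_cat. Qed.

Lemma nl_add a b : nonneg_laurent x y a -> nonneg_laurent x y b -> nonneg_laurent x y (a + b).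
Proof.
move=> [s1 ->] [s2 ->]; exists (s1 ++ s2); by rewrite big_cat.
Qed.

Lemma nl_mul a b : nonneg_laurent x y a -> nonneg_laurent x y b -> nonneg_laurent x y (a * b).
Proof.
move=> [s1 ->] [s2 ->].
exists [seq ((p.1.1 * p.2.1)%N, p.1.2 ++ p.2.2) | p <- [seq (u, v) | u <- s1, v <- s2]].
rewrite big_map big_allpairs mulr_suml; apply: eq_bigr => u _.
rewrite mulr_sumr; apply: eq_bigr => v _ /=.
rewrite natrM lword_cat -!mulrA; congr (_ * _).
by rewrite !mulrA (commr_nat (lword_eval x y u.2)).
Qed.

Lemma nl_letter (l : bool * bool) :
  nonneg_laurent x y (let v := if l.1 then y else x in if l.2 then v^-1 else v).
Proof.
exists [:: (1%N, [:: l])]; by rewrite big_cons big_nil addr0 mul1r /lword_eval big_cons big_nil mulr1.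
Qed.

Lemma nl_x : nonneg_laurent x y x. Proof. exact: (nl_letter (false, false)). Qed.
Lemma nl_y : nonneg_laurent x y y. Proof. exact: (nl_letter (true, false)). Qed.
Lemma nl_xi : nonneg_laurent x y x^-1. Proof. exact: (nl_letter (false, true)). Qed.
Lemma nl_yi : nonneg_laurent x y y^-1. Proof. exact: (nl_letter (true, true)). Qed.
Lemma nl_1 : nonneg_laurent x y 1.
Proof. exists [:: (1%N, [::])]; by rewrite big_cons big_nil addr0 mul1r /lword_eval big_nil. Qed.
End NL.


Lemma free_noncomm (K : fieldType) (D : unitAlgType K) (x y : D) :
  is_free_skew_field x y -> x * y != y * x.
Proof.
case=> _ _ Hfull.
pose p : ncp K := [:: (1, [:: false; true]); (-1, [:: true; false])].
have full : ncmx_full (fun (_ _ : 'I_1) => p).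
  case=> // _ [P [Q H]].
  have := H ord0 ord0 [:: false; true].
  rewrite enum_ord0 /= /ncp_coef !big_cons big_nil /=.
  by move/eqP; rewrite addr0 oner_eq0.
have [B [HB _]] := Hfull 1%N _ full.
apply/negP => /eqP e.
have ev : ncp_eval x y p = 0.
  rewrite /ncp_eval !big_cons big_nil /word_eval !big_cons !big_nil /=.
  by rewrite !mulr1 scale1r scaleN1r addr0 e subrr.
have := congr1 (fun M : 'M[D]_1 => M ord0 ord0) HB.
rewrite !mxE big_ord1 mxE ev mul0r /= => /eqP.
by rewrite eq_sym oner_eq0.
Qed.

Arguments i_eq {D a s t v w C}.
Arguments iphi_eq {D a s t v w C}.
Arguments ii_eq {D s v w C}.

Lemma qstep (D : unitRingType) (a b c C f : D) :
  a \is a GRing.unit -> C \is a GRing.unit ->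
  a * b = b * C * a -> c * C * a = f -> f * b = b * f -> f \is a GRing.unit ->
  c \is a GRing.unit /\ b * c = c * C * b.
Proof.
move=> ua uC q E fb uf.
have uCa : C * a \is a GRing.unit by rewrite unitrMl.
have ce : c = f / (C * a) by rewrite -E -(mulrA c C a) mulrK.
split; first by rewrite ce unitrMl ?unitrV.
apply: (mulIr uCa).
by rewrite -mulrA (mulrA c C a) E -fb -[c * C * b * (C * a)]mulrA (mulrA b C a) -q mulrA E.
Qed.

Arguments qstep {D a b c C f}.
Arguments nl_add {D x y a b}.
Arguments nl_mul {D x y a b}.
Arguments nl_x {D x y}.
Arguments nl_y {D x y}.
Arguments nl_xi {D x y}.
Arguments nl_yi {D x y}.
Arguments nl_1 {D x y}.

Theorem corollary4p4 (R : realType) (D : unitAlgType R[i]) (x y : D)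
  (HD : is_free_skew_field x y) (Rs : int -> D) :
  let C := x * y * x^-1 * y^-1 in
  (forall n : int, Rs (2 * n) * C * Rs (2 * n - 2) = 1 + Rs (2 * n - 1)) ->
  (forall n : int, Rs (2 * n + 1) * C * Rs (2 * n - 1) = 1 + Rs (2 * n) ^+ 4) ->
  Rs 0 = y * x * y^-1 ->
  Rs 1 = y ->
  forall n : nat, nonneg_laurent x y (Rs (2 * n%:Z)).
Proof.
move=> C H1 H2 R0 R1.
have nc := @free_noncomm _ _ x y HD.
case: HD => Hdiv _ _.
have ux : x \is a GRing.unit.
  apply: (Hdiv); apply/eqP => x0; move: nc; by rewrite x0 mul0r mulr0 eqxx.
have uy : y \is a GRing.unit.
  apply: (Hdiv); apply/eqP => y0; move: nc; by rewrite y0 mul0r mulr0 eqxx.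
have uC : C \is a GRing.unit by rewrite /C !unitrMl ?unitrV.
have C1 : C != 1.
  apply/eqP => e; have h : x * y = C * y * x by rewrite /C mulrVK // mulrVK.
  by move: nc; rewrite {1}h e mul1r eqxx.
pose r (k : nat) := Rs k%:Z.
have HE : forall m : nat, r m.*2.+2 * C * r m.*2 = 1 + r m.*2.+1.
  move=> m; have := H1 (m.+1)%:Z.
  have -> : 2 * (m.+1)%:Z = (m.*2.+2)%:Z by lia.
  have -> : (m.*2.+2)%:Z - 2 = (m.*2)%:Z by lia.
  by have -> : (m.*2.+2)%:Z - 1 = (m.*2.+1)%:Z by lia.
have HO : forall m : nat, r m.*2.+3 * C * r m.*2.+1 = 1 + r m.*2.+2 ^+ 4.
  move=> m; have := H2 (m.+1)%:Z.
  have -> : 2 * (m.+1)%:Z + 1 = (m.*2.+3)%:Z by lia.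
  have -> : 2 * (m.+1)%:Z - 1 = (m.*2.+1)%:Z by lia.
  by have -> : 2 * (m.+1)%:Z = (m.*2.+2)%:Z by lia.
have Rec : forall k : nat, r k.+2 * C * r k = 1 + r k.+1 ^+ (if odd k then 4 else 1).
  move=> k; have := odd_double_half k; case: (odd k) => /= e; rewrite -e.
    by rewrite add1n HO.
  by rewrite add0n HE expr1.
have r0 : r 0%N = y * x * y^-1 by exact: R0.
have r1 : r 1%N = y by exact: R1.
have P : forall k : nat, [/\ r k \is a GRing.unit, r k.+1 \is a GRing.unit &
                         r k * r k.+1 = r k.+1 * C * r k].
  elim => [|k [ua ub q]].
    rewrite r0 r1; split => //; first by rewrite !unitrMl ?unitrV.
    by rewrite mulrVK // /C !mulrA mulrVK // mulrVK // mulrK.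
  set f := 1 + r k.+1 ^+ (if odd k then 4 else 1).
  have fb : f * r k.+1 = r k.+1 * f.
    by rewrite /f mulrDl mulrDr mul1r mulr1 -exprSr -exprS.
  have uf : f \is a GRing.unit.
    apply: (Hdiv); apply/eqP => f0; move/eqP: C1; apply.
    move: f0; rewrite /f; case: (odd k) => f0.
      have [kk bk] := @q4_sc _ _ Hdiv _ f0.
      have nk : kk != 0 by apply/eqP => k0; move: ub; rewrite bk k0 scale0r unitr0.
      exact: (@sc_noncomm _ _ _ _ _ kk ua nk bk q).
    have bk : r k.+1 = (-1)%:A.
      by rewrite scaleN1r; apply/eqP; rewrite -addr_eq0 addrC -(expr1 (r k.+1)) f0.
    have nk : (-1 : R[i]) != 0 by rewrite oppr_eq0 oner_eq0.
    exact: (@sc_noncomm _ _ _ _ _ (-1) ua nk bk q).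
  have [uc q'] := qstep ua uC q (Rec k) fb uf.
  by split.
pose G (s v : D) := (1 + v) * s^-1 * (1 + v) + s ^+ 3.
pose Psi (s v : D) := v^-1 * G s v * s^-1.
have HE2 : forall m : nat, r m.*2.+4 * C * r m.*2.+2 = 1 + r m.*2.+3.
  by move=> m; have := HE m.+1; rewrite doubleS.
have Star1 : forall m : nat, r m.*2.+4 + C * r m.*2 = Psi (r m.*2.+2) (r m.*2.+3) * r m.*2.+2.
  move=> m; have [us uv q] := P m.*2.+2.
  have h := i_eq uC us uv q (HE2 m) (HO m) (HE m).
  by rewrite /Psi /G mulrVK // -h mulKr.
have Star2 : forall m : nat, r m.*2.+4 + C * r m.*2 =
    (r m.*2.+2)^-1 * G (r m.*2.+2) (r m.*2.+1) * (r m.*2.+1)^-1 * r m.*2.+2.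
  move=> m; have [ut us qt] := P m.*2.+1.
  have h := iphi_eq uC us ut qt (HE m) (HO m) (HE2 m).
  by apply: (mulrI us); rewrite h /G !mulrA divrr // mul1r.
have PsiPhi : forall m : nat, Psi (r m.*2.+2) (r m.*2.+3) =
    (r m.*2.+2)^-1 * G (r m.*2.+2) (r m.*2.+1) * (r m.*2.+1)^-1.
  move=> m; have [us _ _] := P m.*2.+2.
  by apply: (mulIr us); rewrite -Star1 Star2.
have IIe : forall m : nat, Psi (r m.*2) (r m.*2.+1) =
    (r m.*2.+2)^-1 * G (r m.*2.+2) (r m.*2.+1) * (r m.*2.+1)^-1.
  move=> m; have [us uv q] := P m.*2; have [_ uw _] := P m.*2.+1.
  exact: (ii_eq uC us uv uw q (HE m)).
have Pconst : forall m : nat, Psi (r m.*2) (r m.*2.+1) = Psi (r 0%N) (r 1%N).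
  elim => // m IH; by rewrite doubleS PsiPhi -IIe IH.
have Star : forall m : nat, r m.*2.+4 + C * r m.*2 = Psi (r 0%N) (r 1%N) * r m.*2.+2.
  by move=> m; rewrite Star1; have := Pconst m.+1; rewrite doubleS => ->.
pose g := y * x^-1 * y * x^-1 * y^-1; pose B := x * x * y^-1.
pose A := (x^-1 + x^-1 * y + y * x^-1) * x^-1 * y^-1.
have Cg : C = B * g.
  by rewrite /C /B /g !mulrA mulrVK // mulrK.
have s0i : (y * x * y^-1)^-1 = y * x^-1 * y^-1.
  by rewrite !invrM ?unitrMl ?unitrV // invrK mulrA.
have Keq : Psi (r 0%N) (r 1%N) = g + B + A.
  rewrite /Psi /G r0 r1 s0i.
  have t2 : y^-1 * (y * x * y^-1) ^+ 3 * (y * x^-1 * y^-1) = B.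
    by rewrite /B !exprS expr0 mulr1 !mulrA mulVr // mul1r !mulrVK // mulrK.
  have h1 : forall z, z * y^-1 * (1 + y) * y = z * (1 + y).
    by move=> z; rewrite -!mulrA (mulrA y^-1) comm1V // mulrVK.
  have t1 : y^-1 * ((1 + y) * (y * x^-1 * y^-1) * (1 + y)) * (y * x^-1 * y^-1) =
            (1 + y) * x^-1 * (1 + y) * x^-1 * y^-1.
    have h0 : y^-1 * (1 + y) * y = 1 + y by rewrite comm1V // mulrVK.
    by rewrite !mulrA h0 h1.
  have hexp : (1 + y) * x^-1 * (1 + y) * x^-1 * y^-1 = A + g.
    by rewrite /A /g !mulrDl !mulrDr !mul1r !mulr1 !mulrDl addrA.
  by rewrite mulrDr mulrDl t1 t2 hexp -addrA addrC.
have Cr0 : C * (y * x * y^-1) = x by rewrite /C !mulrA mulrVK // mulrVK // mulrK.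
have u1 : r 2%N = (1 + y) * x^-1.
  have := HE 0%N; rewrite double0 r0 r1 => h.
  by rewrite -h -(mulrA (r 2%N) C) Cr0 mulrK.
have e0 : (1 + y) * x^-1 - g * (y * x * y^-1) = x^-1.
  by rewrite /g !mulrA mulrVK // mulrVK // mulrK // mulrDl mul1r addrK.
have nlg : nonneg_laurent x y g.
  by rewrite /g; apply: nl_mul; [apply: nl_mul; [apply: nl_mul; [apply: nl_mul|]|]|];
     apply: nl_x || apply: nl_y || apply: nl_xi || apply: nl_yi.
have nlB : nonneg_laurent x y B.
  by rewrite /B; apply: nl_mul; [apply: nl_mul|]; apply: nl_x || apply: nl_yi.
have nlA : nonneg_laurent x y A.
  rewrite /A; apply: nl_mul; last exact: nl_yi.
  apply: nl_mul; last exact: nl_xi.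
  apply: nl_add; first apply: nl_add.
  - exact: nl_xi.
  - by apply: nl_mul; [exact: nl_xi | exact: nl_y].
  - by apply: nl_mul; [exact: nl_y | exact: nl_xi].
have T : forall m : nat, nonneg_laurent x y (r m.*2) /\
                         nonneg_laurent x y (r m.*2.+2 - g * r m.*2).
  elim => [|m [Hu He]].
    rewrite double0 u1 r0 e0; split; last exact: nl_xi.
    by apply: nl_mul; [apply: nl_mul|]; apply: nl_x || apply: nl_y || apply: nl_yi.
  rewrite doubleS.
  have Hu' : nonneg_laurent x y (r m.*2.+2).
    by rewrite -(subrK (g * r m.*2) (r m.*2.+2)) addrC; apply: nl_add => //; apply: nl_mul.
  split => //.
  have h4 : r m.*2.+4 = (g + B + A) * r m.*2.+2 - B * g * r m.*2.
    by rewrite -Keq -Cg -Star addrK.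
  have -> : r m.*2.+4 - g * r m.*2.+2 = A * r m.*2.+2 + B * (r m.*2.+2 - g * r m.*2).
    rewrite h4 !mulrDl mulrBr (mulrA B g).
    set p := g * _; set q := B * _; set s := A * _; set t := B * g * _.
    by rewrite -!addrA (addrC (- t)) addrCA (addrCA p s) addNKr addrCA.
  by apply: nl_add; apply: nl_mul.
move=> n; have [h _] := T n.
by have -> : 2 * n%:Z = (n.*2)%:Z by lia.
Qed.
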